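(* Let $W$ be the affine Weyl group of an irreducible reduced crystallographic root system of rank 2, with simple generators $s_0,s_1,s_2$ and $W_0=\langle s_1,s_2\rangle$. Let $H_{r_0}$, $H_{r_1}$ be two adjacent parallel hyperplanes (i.e. $H_{\alpha,c}$ and $H_{\alpha,c+1}$ for a root $\alpha$ and $c\in\mathbb{Z}$). If both the alcove $w\in W$ and the identity alcove lie in the strip between $H_{r_0}$ and $H_{r_1}$, then $w$ is not the element of maximal length in the coset $wW_0$.
   Context: $W$ is generated by the reflections $s_{\beta;k}$ in the lines $H_{\beta,k}=\{v:\langle v,\beta\rangle=k\}$ ($\beta$ a root, $k\in\mathbb{Z}$) of a Euclidean plane; as a Coxeter group its simple generators $s_0,s_1,s_2$ are the reflections in the walls of the fundamental alcove $A_0$, with $s_0$ the reflection in the wall not through the origin; $W_0=\langle s_1,s_2\rangle$ is the finite Weyl group. Elements are identified with alcoves via $w\mapsto wA_0$. $\ell$ is Coxeter length. *)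

(* Defs.v *)
From HB Require Import structures.
From mathcomp Require Import all_boot all_order all_algebra.
From mathcomp Require Import reals.
Set Implicit Arguments. Unset Strict Implicit. Unset Printing Implicit Defensive.
Import Order.TTheory GRing.Theory Num.Theory.
Local Open Scope ring_scope.

(* The irreducible reduced crystallographic root systems of rank 2
   (B2 and C2 are the same root system up to relabelling). *)
Inductive rtype := A2 | B2 | G2.

(* Cartan integers C_ij = <alpha_i^vee, alpha_j>, i,j in {1,2}.
   A2: standard. B2: alpha_1 long, alpha_2 short. G2: alpha_1 short, alpha_2 long. *)
Definition cartan12 (t : rtype) : int :=
  match t with A2 => -1 | B2 => -1 | G2 => -3 end.
Definition cartan21 (t : rtype) : int :=
  match t with A2 => -1 | B2 => -2 | G2 => -1 end.

Definition cartan (t : rtype) : 'M[int]_2 :=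
  \matrix_(i < 2, j < 2)
    (if i == j then 2 else if (i : nat) == 0%N then cartan12 t else cartan21 t).

(* Roots are written by their coordinates (a,b) : beta = a alpha_1 + b alpha_2. *)
Definition pos_roots (t : rtype) : seq (int * int) :=
  match t with
  | A2 => [:: (1, 0); (0, 1); (1, 1)]
  | B2 => [:: (1, 0); (0, 1); (1, 1); (1, 2)]
  | G2 => [:: (1, 0); (0, 1); (1, 1); (2, 1); (3, 1); (3, 2)]
  end%R.

Definition root_system (t : rtype) : seq (int * int) :=
  pos_roots t ++ [seq (- p.1, - p.2) | p <- pos_roots t].

(* highest root theta, and its coroot theta^vee in the basis of simple coroots *)
Definition highest_root (t : rtype) : int * int :=
  match t with A2 => (1, 1) | B2 => (1, 2) | G2 => (3, 2) end%R.
Definition highest_coroot (t : rtype) : int * int :=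
  match t with A2 => (1, 1) | B2 => (1, 1) | G2 => (1, 2) end%R.

Definition vec2 (p q : int) : 'cV[int]_2 :=
  \col_(i < 2) (if (i : nat) == 0%N then p else q).

(* Points v of the plane are given by their coordinates
   x = (<v,alpha_1>, <v,alpha_2>) (basis of fundamental coweights). *)
Definition pairing {R : ringType} (beta : int * int) (x : 'cV[R]_2) : R :=
  beta.1%:~R * x ord0 ord0 + beta.2%:~R * x ord_max ord0.

Definition aff := ('M[int]_2 * 'cV[int]_2)%type.
Definition aff_comp (f g : aff) : aff := (f.1 *m g.1, f.1 *m g.2 + f.2).
Definition aff_id : aff := (1%:M, 0).
Definition aff_act {R : ringType} (f : aff) (x : 'cV[R]_2) : 'cV[R]_2 :=
  map_mx (fun z : int => z%:~R) f.1 *m x + map_mx (fun z : int => z%:~R) f.2.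

(* values (<beta^vee,alpha_1>, <beta^vee,alpha_2>) of a coroot given by its
   coordinates (c,d) : beta^vee = c alpha_1^vee + d alpha_2^vee *)
Definition coroot_vals (t : rtype) (cd : int * int) : 'cV[int]_2 :=
  (cartan t)^T *m vec2 cd.1 cd.2.

(* reflection s_{beta;k} in H_{beta,k}: v |-> v - (<v,beta> - k) beta^vee *)
Definition refl (beta : int * int) (cv : 'cV[int]_2) (k : int) : aff :=
  (1%:M - cv *m (vec2 beta.1 beta.2)^T, k *: cv).

(* simple generators s_0 = s_{theta;1}, s_1 = s_{alpha_1;0}, s_2 = s_{alpha_2;0} *)
Definition gen (t : rtype) (i : 'I_3) : aff :=
  match (i : nat) with
  | 0%N => refl (highest_root t) (coroot_vals t (highest_coroot t)) 1
  | 1%N => refl (1, 0) (coroot_vals t (1, 0)) 0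
  | _ => refl (0, 1) (coroot_vals t (0, 1)) 0
  end.

Definition word_elt (t : rtype) (w : seq 'I_3) : aff :=
  foldr (fun i acc => aff_comp (gen t i) acc) aff_id w.

Lemma has_word_len (t : rtype) (w : seq 'I_3) :
  exists n, [exists s : n.-tuple 'I_3, word_elt t s == word_elt t w].
Proof. exists (size w); apply/existsP; exists (in_tuple w); by []. Qed.

Definition coxlen (t : rtype) (w : seq 'I_3) : nat := ex_minn (has_word_len t w).

Definition in_A0 {R : realType} (t : rtype) (x : 'cV[R]_2) : Prop :=
  0 < x ord0 ord0 /\ 0 < x ord_max ord0 /\ pairing (highest_root t) x < 1.

Definition in_strip {R : realType} (beta : int * int) (c : int) (x : 'cV[R]_2) : Prop :=
  c%:~R < pairing beta x < (c + 1)%:~R.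

(* Main.v *)
Require Import Defs.
From HB Require Import structures.
From mathcomp Require Import all_boot all_order all_algebra.
From mathcomp Require Import reals.
From mathcomp Require Import zify ring lra.
Import Order.TTheory GRing.Theory Num.Theory.
Local Open Scope ring_scope.
Set Implicit Arguments. Unset Strict Implicit.
Record A := mkA {m11:int; m12:int; m21:int; m22:int; t1:int; t2:int}.
Definition compA (f g : A) : A :=
  mkA (m11 f * m11 g + m12 f * m21 g) (m11 f * m12 g + m12 f * m22 g)
      (m21 f * m11 g + m22 f * m21 g) (m21 f * m12 g + m22 f * m22 g)
      (m11 f * t1 g + m12 f * t2 g + t1 f) (m21 f * t1 g + m22 f * t2 g + t2 f).
Definition idA := mkA 1 0 0 1 0 0.
Definition genA (t : rtype) (i : nat) : A :=
  match t, i with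
  | A2, 0%N => mkA 0 (-1) (-1) 0 1 1
  | A2, 1%N => mkA (-1) 0 1 1 0 0
  | A2, _ => mkA 1 1 0 (-1) 0 0
  | B2, 0%N => mkA 1 0 (-1) (-1) 0 1
  | B2, 1%N => mkA (-1) 0 1 1 0 0
  | B2, _ => mkA 1 2 0 (-1) 0 0
  | G2, 0%N => mkA 1 0 (-3) (-1) 0 1
  | G2, 1%N => mkA (-1) 0 3 1 0 0
  | G2, _ => mkA 1 1 0 (-1) 0 0
  end.
Definition i0 : 'I_2 := ord0.
Definition i1 : 'I_2 := ord_max.
Definition toA (f : aff) : A :=
  mkA (f.1 i0 i0) (f.1 i0 i1) (f.1 i1 i0) (f.1 i1 i1) (f.2 i0 ord0) (f.2 i1 ord0).
Lemma ord2E (i : 'I_2) : i = i0 \/ i = i1.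
Proof. case: i => [[|[|//]]] H; [left|right]; exact/val_inj. Qed.
Lemma sum2 (V : nmodType) (F : 'I_2 -> V) : \sum_(j < 2) F j = F i0 + F i1.
Proof. rewrite !big_ord_recl big_ord0 addr0. congr (F _ + F _); exact/val_inj. Qed.
Lemma toA_inj f g : toA f = toA g -> f = g.
Proof.
case: f g => [M v] [M' v'] [E1 E2 E3 E4 E5 E6] /=.
congr pair; apply/matrixP => i j.
  by case: (ord2E i) => ->; case: (ord2E j) => ->.
have -> : j = ord0 by case: j => [[|//]] H; exact/val_inj.
by case: (ord2E i) => ->.
Qed.
Lemma toA_comp f g : toA (aff_comp f g) = compA (toA f) (toA g).
Proof. rewrite /toA /aff_comp /compA /= !mxE !sum2 //. Qed.
Lemma toA_id : toA aff_id = idA.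
Proof. by rewrite /toA /aff_id /= !mxE. Qed.
Lemma toA_gen t (i : 'I_3) : toA (gen t i) = genA t i.
Proof.
case: i => [[|[|[|//]]] Hi]; case: t;
rewrite /toA /gen /refl /coroot_vals /cartan /vec2 /=; rewrite !(mxE, sum2, big_ord1) /=; by [].
Qed.

Definition W0 (t : rtype) : seq (int * int * int * int) :=
  match t with
  | A2 => [:: (1, 0, 0, 1); (-1, 0, 1, 1); (1, 1, 0, -1); (0, -1, -1, 0); (0, 1, -1, -1); (-1, -1, 1, 0)]
  | B2 => [:: (1, 0, 0, 1); (-1, 0, 1, 1); (1, 2, 0, -1); (1, 0, -1, -1); (1, 2, -1, -1); (-1, 0, 0, -1); (-1, -2, 1, 1); (-1, -2, 0, 1)]
  | G2 => [:: (1, 0, 0, 1); (-1, 0, 3, 1); (1, 1, 0, -1); (1, 0, -3, -1); (2, 1, -3, -1); (-1, 0, 0, -1); (-1, -1, 3, 2); (1, 1, -3, -2); (-2, -1, 3, 1); (-2, -1, 3, 2); (2, 1, -3, -2); (-1, -1, 0, 1)]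
  end%R.
Definition latt (t : rtype) (x y : int) : Prop :=
  match t with
  | A2 => (3 %| x + 2 * y)%Z
  | B2 => (2 %| x)%Z
  | G2 => True
  end.
Definition Inv t f := (m11 f, m12 f, m21 f, m22 f) \in W0 t /\ latt t (t1 f) (t2 f).
Definition neg0 (z : int) : int := if z < 0 then 1 else 0.
Definition F (b : int * int) (f : A) : int :=
  b.1 * t1 f + b.2 * t2 f - neg0 (b.1 * (m11 f + m12 f) + b.2 * (m21 f + m22 f)).
Definition N t f : nat := foldr (fun b acc => absz (F b f) + acc)%N 0%N (pos_roots t).

Ltac caseW0 H := move: H; rewrite !inE => H;
  repeat (case/orP: H => [/eqP [-> -> -> ->]|H]); try (move/eqP: H => [-> -> -> ->]).

Lemma N_step_le t f i : Inv t f -> (N t (compA (genA t i) f) <= N t f + 1)%N.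
Proof.
case: f => a b c d x y [HL _]; rewrite /N /=.
case: t HL => HL; caseW0 HL; (case: i => [|[|i]]); rewrite /F /neg0 /=; lia.
Qed.
Lemma N_descent t f : Inv t f -> (0 < N t f)%N ->
  (N t (compA (genA t 0) f) < N t f)%N \/ (N t (compA (genA t 1) f) < N t f)%N \/
  (N t (compA (genA t 2) f) < N t f)%N.
Proof.
case: f => a b c d x y [HL _] Hp; move: Hp; rewrite /N /=.
(case: t HL => HL Hp; move: Hp; caseW0 HL; rewrite /F /neg0 /= => Hp; lia).
Qed.
Lemma N_base t f : Inv t f -> N t f = 0%N -> f = idA.
Proof.
case: f => a b c d x y [HL /= HT]; rewrite /N /=.
move=> H; move: H.
(case: t HL HT => HL /= HT H; move: H; caseW0 HL; rewrite /F /neg0 /= => H;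
  first [exfalso; lia | (have [-> ->] : x = 0 /\ y = 0 by lia); by []]).
Qed.
Lemma Inv_step t f i : Inv t f -> Inv t (compA (genA t i) f).
Proof.
case: f => a b c d x y [HL HT].
(case: t HL HT => HL /= HT; caseW0 HL; case: i => [|[|i]]; rewrite /Inv /=; split => //; lia).
Qed.
Ltac caseR H := move: H; rewrite !inE => H;
  repeat (case/orP: H => [/eqP [-> ->]|H]); try (move/eqP: H => [-> ->]).
Lemma N_right t f b1 b2 c : Inv t f -> (b1, b2) \in root_system t ->
  (10*c < b1 + b2 < 10*c + 10) ->
  (10*c < b1*(m11 f + m12 f) + b2*(m21 f + m22 f) + 10*(b1*t1 f + b2*t2 f) < 10*c+10) ->
  (N t f < N t (compA f (genA t 1)))%N \/ (N t f < N t (compA f (genA t 2)))%N.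
Proof.
case: f => a b c' d x y [HL _] Hb /= H1 H2; move: H1 H2; rewrite /N /=.
(case: t HL Hb => HL Hb; caseR Hb; caseW0 HL; rewrite /F /neg0 /= => H1 H2; lia).
Qed.

Lemma compA_assoc f g h : compA f (compA g h) = compA (compA f g) h.
Proof. case: f g h => ? ? ? ? ? ? [? ? ? ? ? ?] [? ? ? ? ? ?]; rewrite /compA /=; congr mkA; ring. Qed.
Lemma compA1 f : compA f idA = f.
Proof. case: f => ? ? ? ? ? ?; rewrite /compA /=; congr mkA; ring. Qed.
Lemma comp1A f : compA idA f = f.
Proof. case: f => ? ? ? ? ? ?; rewrite /compA /=; congr mkA; ring. Qed.
Lemma gengen t i : compA (genA t i) (genA t i) = idA.
Proof. by case: t; case: i => [|[|i]]. Qed.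

Lemma toA_cons t i w : toA (word_elt t (i :: w)) = compA (genA t i) (toA (word_elt t w)).
Proof. by rewrite /= toA_comp toA_gen. Qed.
Lemma toA_cat t w u : toA (word_elt t (w ++ u)) = compA (toA (word_elt t w)) (toA (word_elt t u)).
Proof.
elim: w => [|i w IH]; first by rewrite /= toA_id comp1A.
by rewrite cat_cons !toA_cons IH compA_assoc.
Qed.
Lemma Inv_id t : Inv t idA.
Proof. by case: t; split => //=; lia. Qed.
Lemma Inv_word t w : Inv t (toA (word_elt t w)).
Proof. elim: w => [|i w IH]; first by rewrite /= toA_id; apply: Inv_id. by rewrite toA_cons; apply: Inv_step. Qed.
Lemma N_id t : N t idA = 0%N.
Proof. by case: t. Qed.
Lemma N_word_le t w : (N t (toA (word_elt t w)) <= size w)%N.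
Proof.
elim: w => [|i w IH]; first by rewrite /= toA_id N_id.
rewrite toA_cons /=; have := N_step_le i (Inv_word t w); lia.
Qed.
Lemma descent' t f : Inv t f -> (0 < N t f)%N -> exists i : 'I_3, (N t (compA (genA t i) f) < N t f)%N.
Proof.
move=> Hi Hp; case: (N_descent Hi Hp) => [H|[H|H]].
- by exists (@Ordinal 3 0 isT).
- by exists (@Ordinal 3 1 isT).
- by exists (@Ordinal 3 2 isT).
Qed.
Lemma exists_word t n : forall f, Inv t f -> N t f = n ->
  exists s : seq 'I_3, size s = n /\ toA (word_elt t s) = f.
Proof.
elim: n => [|n IH] f Hi HN.
  by exists [::]; rewrite (N_base Hi HN) /= toA_id.
have [i Hlt] := descent' Hi (ltac:(by rewrite HN)).
have Hi' := Inv_step i Hi.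
have Hle := N_step_le i Hi'.
rewrite compA_assoc gengen comp1A in Hle.
have [s [Hs Hs']] := IH _ Hi' (ltac:(lia)).
exists (i :: s); split; first by rewrite /= Hs.
by rewrite toA_cons Hs' compA_assoc gengen comp1A.
Qed.
Lemma coxlen_N t w : coxlen t w = N t (toA (word_elt t w)).
Proof.
rewrite /coxlen; case: ex_minnP => n /existsP [s /eqP Hs] Hmin.
apply/eqP; rewrite eqn_leq; apply/andP; split.
  have [s' [Hsz Hw]] := exists_word (Inv_word t w) (erefl _).
  rewrite -Hsz; apply: Hmin; apply/existsP; exists (in_tuple s'); apply/eqP.
  exact: toA_inj.
by rewrite -Hs -{2}(size_tuple s) N_word_le.
Qed.

Definition x0 (R : realType) : 'cV[R]_2 := \col_(i < 2) (10%:R)^-1.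
Lemma x0_A0 (R : realType) t : in_A0 t (x0 R).
Proof.
rewrite /in_A0 /pairing /x0 !mxE; case: t => /=; (split; [|split]); lra.
Qed.
Lemma pair_x0 (R : realType) (b : int * int) : pairing b (x0 R) = (b.1 + b.2)%:~R / 10.
Proof. rewrite /pairing /x0 !mxE; by field. Qed.
Lemma pair_act (R : realType) (b : int * int) f :
  pairing b (aff_act f (x0 R)) =
  (b.1 * (m11 (toA f) + m12 (toA f)) + b.2 * (m21 (toA f) + m22 (toA f))
   + 10 * (b.1 * t1 (toA f) + b.2 * t2 (toA f)))%:~R / 10.
Proof. rewrite /pairing /aff_act /toA /x0 !mxE !sum2 !mxE /=; by field. Qed.
Lemma strip_int (R : realType) (c z : int) :
  (c%:~R < (z%:~R / 10 : R) < (c + 1)%:~R) -> (10 * c < z < 10 * c + 10).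
Proof.
move/andP=> [h1 h2]; apply/andP; split; rewrite -(ltr_int R) ?intrD intrM /=; lra.
Qed.

Unset Implicit Arguments.
Theorem lemma4p39 (R : realType) (t : rtype) (w : seq 'I_3)
    (beta : int * int) (c : int) :
  beta \in root_system t ->
  (forall x : 'cV[R]_2, in_A0 t x -> in_strip beta c x) ->
  (forall x : 'cV[R]_2, in_A0 t x -> in_strip beta c (aff_act (word_elt t w) x)) ->
  exists u : seq 'I_3,
    all (fun i => i != ord0) u /\ (coxlen t w < coxlen t (w ++ u))%N.
Proof.
move=> Hb HA HW.
have H1 : 10 * c < beta.1 + beta.2 < 10 * c + 10.
  apply: (@strip_int R); rewrite -pair_x0; exact: (HA _ (x0_A0 R t)).
have H2 := HW _ (x0_A0 R t); rewrite /in_strip pair_act in H2.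
move/(@strip_int R): H2 => H2.
clear HA HW; case: beta Hb H1 H2 => b1 b2 Hb /= H1 H2.
case: (N_right (Inv_word t w) Hb H1 H2) => H.
- exists [:: @Ordinal 3 1 isT]; split => //.
  by rewrite !coxlen_N toA_cat toA_cons /= toA_id compA1.
- exists [:: @Ordinal 3 2 isT]; split => //.
  by rewrite !coxlen_N toA_cat toA_cons /= toA_id compA1.
Qed.
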